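(* Let $m\ge1$, $n_1=\cdots=n_m=2$, $I=(1,\ldots,1)$, $J=(2,\ldots,2)$ and $c\in\mathbb{C}\setminus\{0\}$. Then $\operatorname{hrank}(\mathcal{E}^{IJ}(c))=2m$, and a Hermitian rank decomposition is $$\mathcal{E}^{IJ}(c)=\frac{1}{2m}\Big([\tilde u_0,u_0,\ldots,u_0]_{\otimes h}+(-1)^m[\tilde u_m,u_m,\ldots,u_m]_{\otimes h}+\sum_{k=1}^{m-1}(-1)^k\big([\tilde u_k,u_k,\ldots,u_k]_{\otimes h}+[\tilde v_k,\overline{u_k},\ldots,\overline{u_k}]_{\otimes h}\big)\Big),$$ where $u_k=(1,e^{k\pi\sqrt{-1}/m})$, $\tilde u_k=(c,e^{k\pi\sqrt{-1}/m})$, $\tilde v_k=(c,e^{-k\pi\sqrt{-1}/m})$ for $k=0,\ldots,m$.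
   Context: $\mathbb{C}^{[2,\ldots,2]}$ ($m$ copies) is the real vector space of tensors $\mathcal{H}\in\mathbb{C}^{2\times\cdots\times2}$ of order $2m$ with $\mathcal{H}_{i_1\ldots i_m j_1\ldots j_m}=\overline{\mathcal{H}_{j_1\ldots j_m i_1\ldots i_m}}$. For $v_i\in\mathbb{C}^2$, $[v_1,\ldots,v_m]_{\otimes h}:=v_1\otimes\cdots\otimes v_m\otimes\overline{v_1}\otimes\cdots\otimes\overline{v_m}$. $\operatorname{hrank}(\mathcal{H})$ is the smallest $r$ such that $\mathcal{H}=\sum_{i=1}^r\lambda_i[u_i^1,\ldots,u_i^m]_{\otimes h}$ with $\lambda_i\in\mathbb{R}$, $u_i^j\in\mathbb{C}^2$. $\mathcal{E}^{IJ}(c)$ is the Hermitian tensor whose entry at $(I,J)=(1,\ldots,1,2,\ldots,2)$ is $c$, whose entry at $(J,I)$ is $\overline{c}$, and all other entries are zero. *)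

(* Defs.v *)
From mathcomp Require Import all_boot all_order all_algebra.
From mathcomp Require Import all_classical all_reals all_analysis.
From mathcomp.real_closed Require Import complex.
Import GRing.Theory Num.Theory.
Local Open Scope ring_scope.
Local Open Scope complex_scope.

Set Implicit Arguments. Unset Strict Implicit. Unset Printing Implicit Defensive.

(* A multi-index (i_1,...,i_m) with i_j in {1,2}; entry value k : 'I_2
   encodes the index k+1 (so 0 <-> 1, 1 <-> 2). *)
Definition midx (m : nat) := {ffun 'I_m -> 'I_2}.

(* A tensor in C^{2 x ... x 2} of order 2m: H(I, J) with I, J multi-indices. *)
Definition tensor (R : realType) (m : nat) := midx m -> midx m -> R[i].

Definition cvec (R : realType) := 'I_2 -> R[i].

Definition vec2 (R : realType) (a b : R[i]) : cvec R :=
  fun k => if (k : nat) == 0%N then a else b.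

Definition hermitian (R : realType) (m : nat) (H : tensor R m) : Prop :=
  forall I J, H I J = conjc (H J I).

(* [v_1,...,v_m]_{(x)h} = v_1 (x) ... (x) v_m (x) conj v_1 (x) ... (x) conj v_m *)
Definition htensor (R : realType) (m : nat) (v : 'I_m -> cvec R) : tensor R m :=
  fun I J => \prod_(j < m) (v j (I j) * conjc (v j (J j))).

Definition hdecomp (R : realType) (m : nat) (H : tensor R m) (r : nat) : Prop :=
  exists (lam : 'I_r -> R) (u : 'I_r -> 'I_m -> cvec R),
    H = fun I J => \sum_(i < r) (lam i)%:C * htensor (u i) I J.

Definition is_hrank (R : realType) (m : nat) (H : tensor R m) (r : nat) : Prop :=
  hdecomp H r /\ forall r', hdecomp H r' -> (r <= r')%N.

Definition idxI (m : nat) : midx m := [ffun _ => 0%R].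
Definition idxJ (m : nat) : midx m := [ffun _ => 1%R].

Definition EIJ (R : realType) (m : nat) (c : R[i]) : tensor R m :=
  fun A B =>
    if (A == idxI m) && (B == idxJ m) then c
    else if (A == idxJ m) && (B == idxI m) then conjc c
    else 0.

Definition expi (R : realType) (theta : R) : R[i] := cos theta +i* sin theta.

Definition firstrest (R : realType) (m : nat) (w v : cvec R) : 'I_m -> cvec R :=
  fun j => if (j : nat) == 0%N then w else v.

(* Main.v *)
Require Import Defs.
From mathcomp Require Import all_boot all_order all_algebra.
From mathcomp Require Import all_classical all_reals all_analysis.
From mathcomp.real_closed Require Import complex.
From mathcomp Require Import ring lra zify.
Import GRing.Theory Num.Theory.
Local Open Scope ring_scope.
Local Open Scope complex_scope.

Section Kill.
Variable R : realType.
Definition keq (p q x y al be r i : R) := p * al + q * be + 2 * (x * r - y * i) = 0.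

Lemma kill1 (a1 b1 r1 i1 a2 b2 r2 i2 : R) : a1 != 0 ->
  exists p q x y : R, (x != 0 \/ y != 0) /\ keq p q x y a1 b1 r1 i1 /\ keq p q x y a2 b2 r2 i2.
Proof.
move=> a10.
set C1 := a1 * i2 - a2 * i1; set C2 := a1 * r2 - a2 * r1.
have [hC|hC] := boolP ((C1 != 0) || (C2 != 0)).
  exists (- (2 * (C1 * r1 - C2 * i1)) / a1), 0, C1, C2; split.
    by case/orP: hC; [left|right].
  rewrite /keq; split; first by field.
  apply/eqP; rewrite -(mulIr_eq0 _ (mulIf a10)) /=.
  by apply/eqP; rewrite /C1 /C2; field.
case/norP: hC => h1 h2. move: h1 h2; rewrite !negbK => /eqP h1 /eqP h2.
exists (- (2 * r1) / a1), 0, 1, 0; split; first by left; exact: oner_neq0.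
rewrite /keq; split; first by field.
apply/eqP; rewrite -(mulIr_eq0 _ (mulIf a10)) /=.
apply/eqP. transitivity (2 * C2); last by rewrite h2 mulr0.
by rewrite /C2; field.
Qed.

Lemma keqC p q x y a b r i : keq p q x y a b r i = keq q p x y b a r i.
Proof. by rewrite /keq (addrC (p * a)). Qed.

Lemma killR (a1 b1 r1 i1 a2 b2 r2 i2 : R) :
  (a1 = 0 -> b1 = 0 -> r1 = 0 /\ i1 = 0) ->
  (a2 = 0 -> b2 = 0 -> r2 = 0 /\ i2 = 0) ->
  exists p q x y : R, (x != 0 \/ y != 0) /\ keq p q x y a1 b1 r1 i1 /\ keq p q x y a2 b2 r2 i2.
Proof.
move=> H1 H2.
have [a10|a10] := eqVneq a1 0; last exact: kill1.
have [b10|b10] := eqVneq b1 0; last first.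
  have [q [p [x [y [h [e1 e2]]]]]] := kill1 b1 a1 r1 i1 b2 a2 r2 i2 b10.
  by exists p, q, x, y; split => //; split; rewrite keqC.
have [r10 i10] := H1 a10 b10.
have [a20|a20] := eqVneq a2 0; last first.
  have [p [q [x [y [h [e1 e2]]]]]] := kill1 a2 b2 r2 i2 a1 b1 r1 i1 a20.
  by exists p, q, x, y.
have [b20|b20] := eqVneq b2 0; last first.
  have [q [p [x [y [h [e1 e2]]]]]] := kill1 b2 a2 r2 i2 b1 a1 r1 i1 b20.
  by exists p, q, x, y; split => //; split; rewrite keqC.
have [r20 i20] := H2 a20 b20.
exists 0, 0, 1, 0; split; first by left; exact: oner_neq0.
by rewrite /keq a10 b10 r10 i10 a20 b20 r20 i20; split; ring.
Qed.
End Kill.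

Set Implicit Arguments. Unset Strict Implicit. Unset Printing Implicit Defensive.

Section LB.
Variable R : realType.

Definition sR (p q : R) (w : R[i]) (v : cvec R) : R :=
  let a := v 0%R in let b := v 1%R in
  p * (complex.Re a ^+ 2 + complex.Im a ^+ 2) + q * (complex.Re b ^+ 2 + complex.Im b ^+ 2)
   + 2 * (complex.Re w * (complex.Re a * complex.Re b + complex.Im a * complex.Im b)
          - complex.Im w * (complex.Im a * complex.Re b - complex.Re a * complex.Im b)).

Lemma sform (p q : R) (w : R[i]) (v : cvec R) :
  p%:C * v 0%R * (v 0%R)^* + w * v 0%R * (v 1%R)^* + w^* * v 1%R * (v 0%R)^* + q%:C * v 1%R * (v 1%R)^*
  = (sR p q w v)%:C.
Proof.
rewrite /sR; case: (v 0%R) => xa ya; case: (v 1%R) => xb yb; case: w => u v' /=.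
apply/eqP; rewrite eq_complex /=; apply/andP; split; apply/eqP; ring.
Qed.

Lemma sq0 (x y : R) : x ^+ 2 + y ^+ 2 = 0 -> x = 0 /\ y = 0.
Proof. move=> h; split; nra. Qed.

Lemma killC (v1 v2 : cvec R) : exists p q (w : R[i]),
  w != 0 /\ sR p q w v1 = 0 /\ sR p q w v2 = 0.
Proof.
have H (v : cvec R) :
  let a := v 0%R in let b := v 1%R in
  complex.Re a ^+ 2 + complex.Im a ^+ 2 = 0 -> complex.Re b ^+ 2 + complex.Im b ^+ 2 = 0 ->
  complex.Re a * complex.Re b + complex.Im a * complex.Im b = 0 /\
  complex.Im a * complex.Re b - complex.Re a * complex.Im b = 0.
  move=> a b /sq0 [-> ->] /sq0 [-> ->]; split; ring.
have [p [q [x [y [hxy [e1 e2]]]]]] := @killR R _ _ _ _ _ _ _ _ (H v1) (H v2).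
exists p, q, (x +i* y); split.
  by rewrite eq_complex /= negb_and; case: hxy => ->; rewrite ?orbT.
by split; [exact: e1 | exact: e2].
Qed.

Definition ext m (a : 'I_2) (A : midx m) : midx m.+1 :=
  [ffun j => if unlift ord0 j is Some j' then A j' else a].

Lemma ext0 m a (A : midx m) : ext a A ord0 = a.
Proof. by rewrite ffunE unlift_none. Qed.

Lemma extS m a (A : midx m) j : ext a A (lift ord0 j) = A j.
Proof. by rewrite ffunE liftK. Qed.

Lemma ext_inj m a b (A B : midx m) : (ext a A == ext b B) = (a == b) && (A == B).
Proof.
apply/eqP/andP => [h|[/eqP -> /eqP ->]] //; split.
  by rewrite -(ext0 a A) -(ext0 b B) h.
by apply/eqP/ffunP => j; rewrite -(extS a A) -(extS b B) h.
Qed.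

Lemma idxI_ext m : idxI m.+1 = ext 0%R (idxI m).
Proof.
apply/ffunP => j; rewrite !ffunE; by case: (unlift ord0 j) => [j'|]; rewrite ?ffunE.
Qed.

Lemma idxJ_ext m : idxJ m.+1 = ext 1%R (idxJ m).
Proof.
apply/ffunP => j; rewrite !ffunE; by case: (unlift ord0 j) => [j'|]; rewrite ?ffunE.
Qed.

Lemma idxIJ m : (0 < m)%N -> idxI m != idxJ m.
Proof.
move=> m0; apply/eqP => /ffunP /(_ (Ordinal m0)); rewrite !ffunE; by [].
Qed.

Definition contr m (p q : R) (w : R[i]) (H : tensor R m.+1) : tensor R m :=
  fun A B => p%:C * H (ext 0%R A) (ext 0%R B) + w * H (ext 0%R A) (ext 1%R B)
           + w^* * H (ext 1%R A) (ext 0%R B) + q%:C * H (ext 1%R A) (ext 1%R B).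

Lemma contr_htensor m p q w (u : 'I_m.+1 -> cvec R) A B :
  contr p q w (htensor u) A B
  = (sR p q w (u ord0))%:C * htensor (fun j => u (lift ord0 j)) A B.
Proof.
rewrite /contr /htensor !big_ord_recl !ext0.
under eq_bigr => j _ do rewrite !extS.
under [X in _ + _ * (_ * X) + _ + _]eq_bigr => j _ do rewrite !extS.
under [X in _ + _ + _ * (_ * X) + _]eq_bigr => j _ do rewrite !extS.
under [X in _ + _ + _ + _ * (_ * X)]eq_bigr => j _ do rewrite !extS.
rewrite -sform; ring.
Qed.

End LB.


Section LB2.
Variable R : realType.

Lemma contr_sum m p q (w : R[i]) r (lam : 'I_r -> R) (u : 'I_r -> 'I_m.+1 -> cvec R) :
  contr p q w (fun A B => \sum_(i < r) (lam i)%:C * htensor (u i) A B)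
  = (fun A B => \sum_(i < r) (lam i * sR p q w (u i ord0))%:C
                  * htensor (fun j => u i (lift ord0 j)) A B).
Proof.
apply: funext => A; apply: funext => B.
rewrite /contr !mulr_sumr -!big_split /=; apply: eq_bigr => i _.
rewrite rmorphM /= -mulrA -contr_htensor /contr; ring.
Qed.

Lemma contr_EIJ m p q (w c : R[i]) : (0 < m)%N ->
  contr p q w (@EIJ R m.+1 c) = @EIJ R m (w * c).
Proof.
move=> m0; apply: funext => A; apply: funext => B.
rewrite /contr /EIJ idxI_ext idxJ_ext !ext_inj /=.
have hIJ := idxIJ m0.
have hJI : idxJ m != idxI m by rewrite eq_sym.
case: (A =P idxI m) => [->|nA]; case: (B =P idxJ m) => [->|nB];
  case: (A =P idxJ m) => [hA|nA']; case: (B =P idxI m) => [hB|nB'] /=;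
  rewrite ?hA ?hB ?(negbTE hIJ) ?(negbTE hJI) ?eqxx /= ?rmorphM; ring.
Qed.



Lemma conjcM (x y : R[i]) : conjc (x * y) = conjc x * conjc y.
Proof. exact: rmorphM. Qed.

Lemma conjc_prod m (F : 'I_m -> R[i]) : conjc (\prod_(j < m) F j) = \prod_(j < m) conjc (F j).
Proof. exact: rmorph_prod. Qed.

Lemma ht_mul m (u : 'I_m -> cvec R) :
  htensor u (idxI m) (idxI m) * htensor u (idxJ m) (idxJ m)
  = htensor u (idxI m) (idxJ m) * conjc (htensor u (idxI m) (idxJ m)).
Proof.
rewrite /htensor -big_split conjc_prod -big_split /=; apply: eq_bigr => j _.
rewrite !ffunE conjcM conjcK; ring.
Qed.

Lemma lb m : forall (c : R[i]) r (lam : 'I_r -> R) (u : 'I_r -> 'I_m -> cvec R),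
  c != 0 ->
  @EIJ R m c = (fun A B => \sum_(i < r) (lam i)%:C * htensor (u i) A B) ->
  (2 * m <= #|[set i | lam i != 0%R]|)%N.
Proof.
elim: m => [|m IH] c r lam u c0 E; first by [].
set N := [set i | lam i != 0].
have [N1|N2] := leqP #|N| 1.
  exfalso.
  have hIJ : idxI m.+1 != idxJ m.+1 by apply: idxIJ.
  have hJI : idxJ m.+1 != idxI m.+1 by rewrite eq_sym.
  have EII := congr1 (fun H => H (idxI m.+1) (idxI m.+1)) E.
  have EJJ := congr1 (fun H => H (idxJ m.+1) (idxJ m.+1)) E.
  have EIJ' := congr1 (fun H => H (idxI m.+1) (idxJ m.+1)) E.
  rewrite /= /EIJ !eqxx (negbTE hIJ) (negbTE hJI) /= in EII EJJ EIJ'.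
  case: (pickP (fun i => i \in N)) => [i0 Hi0 | Hnone].
    have single (A B : midx m.+1) : \sum_(i < r) (lam i)%:C * htensor (u i) A B
        = (lam i0)%:C * htensor (u i0) A B.
      rewrite (bigD1 i0) //= big1 ?addr0 // => i ni.
      have : i \notin N.
        apply/negP => iN; move: N1; rewrite leqNgt => /negP; apply.
        by apply/card_gt1P; exists i, i0.
      by rewrite inE negbK => /eqP ->; rewrite mul0r.
    rewrite !single in EII EJJ EIJ'.
    have : c * conjc c = 0.
      rewrite EIJ' conjcM conjc_real.
      transitivity ((lam i0)%:C * htensor (u i0) (idxI m.+1) (idxI m.+1)
                    * ((lam i0)%:C * htensor (u i0) (idxJ m.+1) (idxJ m.+1))).
        by rewrite -!mulrA [X in _ * X = _]mulrCA -ht_mul; ring.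
      by rewrite -EII mul0r.
    by move/eqP; rewrite mulf_eq0 conjc_eq0 orbb (negbTE c0).
  move: EIJ'; rewrite big1 => [h|i _]; first by move: c0; rewrite h eqxx.
  by move: (Hnone i); rewrite inE => /negbFE/eqP ->; rewrite mul0r.
case: m IH u E => [|m] IH u E; first by [].
have [i1 [i2 [h1 h2 h12]]] := card_gt1P N2.
have [p [q [w [w0 [s1 s2]]]]] := killC (u i1 ord0) (u i2 ord0).
have E' := congr1 (contr p q w) E.
rewrite contr_EIJ // contr_sum in E'.
have := IH _ _ _ _ (mulf_neq0 w0 c0) E'.
set N' := [set i | _ != 0] => hN'.
have sub : N' \subset N :\: [set i1; i2].
  apply/fintype.subsetP => i; rewrite !inE => hi.
  rewrite mulf_eq0 negb_or in hi; case/andP: hi => -> hs; rewrite andbT.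
  by apply/norP; split; apply/negP => /eqP ei; move: hs; rewrite ei ?s1 ?s2 eqxx.
have := subset_leq_card sub.
rewrite cardsD.
have -> : N :&: [set i1; i2] = [set i1; i2].
  by apply/finset.setIidPr; apply/fintype.subsetP => i; rewrite !inE; case/orP => /eqP ->; [move: h1 | move: h2]; rewrite inE.
rewrite cards2 h12; move: hN'; lia.
Qed.

End LB2.


Section Trig.
Variable R : realType.

Lemma expiD (a b : R) : expi (a + b) = expi a * expi b.
Proof.
rewrite /expi cosD sinD; apply/eqP; rewrite eq_complex /=; apply/andP; split; apply/eqP; ring.
Qed.

Lemma expiN (a : R) : expi (- a) = conjc (expi a).
Proof. by rewrite /expi cosN sinN. Qed.

Lemma expi0 : expi (0 : R) = 1.
Proof. by rewrite /expi cos0 sin0. Qed.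

Lemma expi_nat n (a : R) : expi (n%:R * a) = expi a ^+ n.
Proof.
elim: n => [|n IH]; first by rewrite mul0r expi0.
by rewrite exprS -IH -expiD mulrS mulrDl mul1r.
Qed.

Lemma expipi : expi (pi : R) = -1.
Proof. rewrite /expi cospi sinpi; apply/eqP; rewrite eq_complex /= oppr0 !eqxx //. Qed.

Lemma expiJM (a : R) : conjc (expi a) * expi a = 1.
Proof. by rewrite -expiN -expiD addNr expi0. Qed.

Variable m : nat.
Hypothesis m0 : (0 < m)%N.
Let om := expi (pi / (m%:R : R)).

Lemma omX k : expi (k%:R * pi / (m%:R : R)) = om ^+ k.
Proof. by rewrite -mulrA expi_nat. Qed.

Lemma mR0 : (m%:R : R) != 0.
Proof. by rewrite pnatr_eq0 -lt0n. Qed.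

Lemma om_m : om ^+ m = -1.
Proof. by rewrite -omX mulrAC divff ?mul1r ?expipi // mR0. Qed.

Lemma om_2m : om ^+ (2 * m) = 1.
Proof. by rewrite mulnC exprM om_m expr2 mulN1r opprK. Qed.

Lemma om_Im_gt0 j : (0 < j < m)%N -> 0 < complex.Im (om ^+ j).
Proof.
case/andP => j0 jm.
rewrite -omX /expi /=; apply: sin_gt0_pi.
have pi0 : (0 : R) < pi := pi_gt0 R.
have mp : (0 : R) < m%:R by rewrite ltr0n.
have jp : (0 : R) < j%:R by rewrite ltr0n.
have jmR : (j%:R : R) < m%:R by rewrite ltr_nat.
apply/andP; split; first by apply: divr_gt0 => //; apply: mulr_gt0.
by rewrite ltr_pdivrMr //; nra.
Qed.

Lemma neq1_Im (z : R[i]) : complex.Im z != 0 -> z != 1.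
Proof. by apply: contra => /eqP ->. Qed.

Lemma om_neq1 j : (0 < j < 2 * m)%N -> om ^+ j != 1.
Proof.
case/andP => j0 j2m.
have [jm|jm] := ltnP j m.
  by apply: neq1_Im; apply: lt0r_neq0; apply: om_Im_gt0; rewrite j0.
have [ejm|njm] := eqVneq j m.
  rewrite ejm om_m; apply/eqP => /eqP; rewrite eq_complex /= => /andP[/eqP h _].
  have : (-1 : R) < 1 by lra.
  by rewrite h Order.POrderTheory.ltxx.
have -> : j = (m + (j - m))%N by rewrite subnKC.
rewrite exprD om_m mulN1r; apply: neq1_Im.
have : 0 < complex.Im (om ^+ (j - m)) by apply: om_Im_gt0; apply/andP; split; lia.
case: (om ^+ (j - m)) => x y /= h; apply: ltr0_neq0; lra.
Qed.

Lemma om_eq1 n : (om ^+ n == 1) = (2 * m %| n)%N.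
Proof.
have -> : om ^+ n = om ^+ (n %% (2 * m)).
  by rewrite {1}(divn_eq n (2 * m)) exprD mulnC exprM om_2m expr1n mul1r.
rewrite /dvdn; have [e0|e0] := eqVneq (n %% (2 * m))%N 0%N; first by rewrite e0 expr0 eqxx.
apply/negbTE; apply: om_neq1; rewrite lt0n e0 /= ltn_mod; lia.
Qed.

End Trig.


Section Form.
Variable R : realType.

Definition hh (c : R[i]) (a : 'I_2) : R[i] := if a == 0%R then c else 1.
Definition cnt m (A : midx m) : nat := \sum_(j < m) (A j : nat).

Lemma conjcX (x : R[i]) n : conjc (x ^+ n) = (conjc x) ^+ n.
Proof. exact: rmorphXn. Qed.

Lemma conjcM' (x y : R[i]) : conjc (x * y) = conjc x * conjc y.
Proof. exact: rmorphM. Qed.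

Lemma vec2E (x z : R[i]) (a : 'I_2) : vec2 x z a = hh x a * z ^+ a.
Proof. by case: a => [[|[|a]] ha] //=; rewrite /vec2 /hh /= ?mulr1 ?mul1r ?expr1. Qed.

Lemma hh1 (a : 'I_2) : hh 1 a = 1.
Proof. by rewrite /hh if_same. Qed.

Lemma Tform n (c z : R[i]) (A B : midx n.+1) :
  htensor (firstrest (vec2 c z) (vec2 1 z)) A B
  = hh c (A ord0) * conjc (hh c (B ord0)) * (z ^+ cnt A * (conjc z) ^+ cnt B).
Proof.
rewrite /htensor big_ord_recl /firstrest /=.
under eq_bigr => j _ do rewrite !vec2E !hh1 conjcM' conjcX conjc1 !mul1r.
rewrite big_split /= !prodrXr /cnt !big_ord_recl !vec2E !conjcM' !conjcX !exprD; ring.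
Qed.


Variable n : nat.
Let m := n.+1.
Let om := expi (pi / (m%:R : R)).
Let m0 : (0 < m)%N. Proof. by []. Qed.

Lemma om_neq0 : om != 0.
Proof.
apply/eqP => h; have := expiJM (pi / (m%:R : R)); rewrite -/om h mulr0 => /eqP.
by rewrite eq_sym oner_eq0.
Qed.

Lemma conj_om : conjc om = om ^+ (2 * m - 1).
Proof.
apply: (mulIf om_neq0); rewrite expiJM -exprSr subn1 prednK; last by [].
by rewrite om_2m.
Qed.

Lemma cnt_le (A : midx m) : (cnt A <= m)%N.
Proof.
rewrite /cnt; apply: (@leq_trans (\sum_(j < m) 1)%N); last by rewrite sum1_card card_ord.
by apply: leq_sum => j _; have := ltn_ord (A j); lia.
Qed.

Lemma cnt0 (A : midx m) : cnt A = 0%N -> A = idxI m.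
Proof.
move/eqP; rewrite /cnt sum_nat_eq0 => /forallP h.
apply/ffunP => j; rewrite ffunE; apply: val_inj => /=; by move/eqP: (h j).
Qed.

Lemma cntm (A : midx m) : cnt A = m -> A = idxJ m.
Proof.
move=> h.
have e : (\sum_(j < m) (1 - A j) + cnt A = m)%N.
  rewrite /cnt -big_split /= -[in RHS](card_ord m) -sum1_card.
  by apply: eq_bigr => j _; have := ltn_ord (A j); lia.
have : (\sum_(j < m) (1 - A j) == 0)%N by apply/eqP; lia.
rewrite sum_nat_eq0 => /forallP h'.
apply/ffunP => j; rewrite ffunE; apply: val_inj => /=.
by move/eqP: (h' j); have := ltn_ord (A j); lia.
Qed.

Lemma cntI : cnt (idxI m) = 0%N.
Proof. by rewrite /cnt big1 // => j _; rewrite ffunE. Qed.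

Lemma cntJ : cnt (idxJ m) = m.
Proof. by rewrite /cnt (eq_bigr (fun _ => 1%N)) ?sum1_card ?card_ord // => j _; rewrite ffunE. Qed.

Lemma div_cases a b : (a <= m)%N -> (b <= m)%N -> (2 * m %| a + (2 * m - 1) * b + m)%N ->
  (a = 0 /\ b = m)%N \/ (a = m /\ b = 0)%N.
Proof.
move=> am bm.
have -> : (a + (2 * m - 1) * b + m = (a + (m - b)) + b * (2 * m))%N.
  rewrite /m; nia.
rewrite (dvdn_addl _ (dvdn_mull b (dvdnn (2 * m)))).
have [x0|x0] := eqVneq (a + (m - b))%N 0%N; first by left; lia.
move=> /dvdn_leq h; have h2 : (2 * m <= a + (m - b))%N by apply: h; rewrite lt0n.
by right; lia.
Qed.


Lemma conj1' : ((1 : R) -i* 0) = 1.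
Proof. by apply/eqP; rewrite eq_complex /= oppr0 !eqxx. Qed.

Lemma geom (z : R[i]) : z ^+ (2 * m) = 1 ->
  \sum_(k < 2 * m) z ^+ k = if z == 1 then (2 * m)%:R else 0.
Proof.
move=> hz; have [->|z1] := eqVneq z 1.
  by rewrite (eq_bigr (fun _ => 1)) ?sumr_const ?card_ord // => k _; rewrite expr1n.
have := subrX1 z (2 * m); rewrite hz subrr => /esym /eqP; rewrite mulf_eq0 subr_eq0 (negbTE z1) /=.
by move/eqP.
Qed.

Lemma keysum (c : R[i]) (A B : midx m) :
  \sum_(k < 2 * m) (-1) ^+ k * htensor (firstrest (vec2 c (om ^+ k)) (vec2 1 (om ^+ k))) A B
  = (2 * m)%:R * @EIJ R m c A B.
Proof.
set a := cnt A; set b := cnt B.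
set HC := hh c (A ord0) * conjc (hh c (B ord0)).
set e := (a + (2 * m - 1) * b + m)%N.
have term k : (-1) ^+ k * htensor (firstrest (vec2 c (om ^+ k)) (vec2 1 (om ^+ k))) A B
    = HC * (om ^+ e) ^+ k.
  rewrite Tform conjcX conj_om -/a -/b -/HC.
  have -> : (-1 : R[i]) = om ^+ m by rewrite om_m.
  rewrite -!exprM mulrCA -!exprD; congr (_ * om ^+ _).
  rewrite /e; set t := (2 * m - 1)%N; ring.
under eq_bigr => k _ do rewrite term.
rewrite -mulr_sumr geom; last first.
  by rewrite exprAC om_2m //; apply: expr1n.
rewrite om_eq1 //.
have hIJ : idxI m != idxJ m.
  by apply/eqP => /ffunP /(_ ord0); rewrite !ffunE.
rewrite /EIJ.
have [hA|hA] := eqVneq A (idxI m).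
  have [hB|hB] := eqVneq B (idxJ m).
    have de : (2 * m %| e)%N.
      rewrite /e /a /b hA hB cntI cntJ; apply/dvdnP; exists m; rewrite /m; nia.
    by rewrite de /HC hA hB !ffunE /hh /= conj1' mulr1 mulrC.
  rewrite hA (negbTE hIJ) /=.
  have -> : (2 * m %| e)%N = false.
    apply/negP => /(div_cases (cnt_le A) (cnt_le B)) [[_ /cntm hB'] | [/cntm hA'' _]].
      by move: hB; rewrite hB' eqxx.
    by move: hIJ; rewrite -hA -hA'' eqxx.
  by rewrite !mulr0.
have [hA'|hA'] := eqVneq A (idxJ m).
  have [hB|hB] := eqVneq B (idxI m).
    have de : (2 * m %| e)%N.
      by rewrite /e /a /b hA' hB cntI cntJ muln0 addn0 addnn -mul2n dvdnn.
    rewrite de /HC hA' hB !ffunE /hh /=.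
    by rewrite mul1r mulrC.
  have -> : (2 * m %| e)%N = false.
    apply/negP => /(div_cases (cnt_le A) (cnt_le B)) [[/cnt0 hA'' _] | [_ /cnt0 hB']].
      by move: hA; rewrite hA'' eqxx.
    by move: hB; rewrite hB' eqxx.
  by rewrite /= !mulr0.
have -> : (2 * m %| e)%N = false.
  apply/negP => /(div_cases (cnt_le A) (cnt_le B)) [[/cnt0 hA'' _] | [/cntm hA'' _]].
    by move: hA; rewrite hA'' eqxx.
  by move: hA'; rewrite hA'' eqxx.
by rewrite /= !mulr0.
Qed.
End Form.


Lemma regroup (R : realType) (F : nat -> R[i]) n :
  \sum_(k < 2 * n.+1) F k = F 0%N + F n.+1 + \sum_(1 <= k < n.+1) (F k + F (2 * n.+1 - k)%N).
Proof.
set m := n.+1.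
rewrite -(big_mkord xpredT) (big_cat_nat (n:=m)) //=; last by rewrite /m; lia.
rewrite (big_ltn (m:=0)) // (big_ltn (m:=m)); last by rewrite /m; lia.
rewrite big_split /=.
have -> : \sum_(m.+1 <= i < 2 * m) F i = \sum_(1 <= k < m) F (2 * m - k)%N.
  rewrite big_nat_rev /= (big_addn 0 (2 * m) m.+1) (big_addn 0 m 1).
  have -> : (2 * m - m.+1 = m - 1)%N by rewrite /m; lia.
  by apply: eq_big_nat => i /andP[_ hi]; congr F; rewrite /m in hi *; lia.
ring.
Qed.

Section Main.
Variable R : realType.

Lemma coefC (n i : nat) :
  (((-1) ^+ i / (n%:R) : R))%:C = (n%:R : R[i])^-1 * (-1) ^+ i.
Proof. by rewrite rmorphM /= rmorphXn rmorphN1 fmorphV rmorph_nat mulrC. Qed.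

End Main.


Unset Implicit Arguments. Set Strict Implicit. Set Printing Implicit Defensive.

Theorem proposition2p2 (R : realType) (m : nat) (c : R[i]) :
  (1 <= m)%N -> c != 0 ->
  let om (k : nat) : R[i] := expi ((k%:R * pi) / m%:R) in
  let omN (k : nat) : R[i] := expi (- ((k%:R * pi) / m%:R)) in
  let u (k : nat) : cvec R := vec2 1 (om k) in
  let ut (k : nat) : cvec R := vec2 c (om k) in
  let vt (k : nat) : cvec R := vec2 c (omN k) in
  let ubar (k : nat) : cvec R := fun l => conjc (u k l) in
  is_hrank (@EIJ R m c) (2 * m)
  /\ @EIJ R m c =
     (fun A B =>
        (2 * m)%:R^-1 *
        (htensor (firstrest (ut 0%N) (u 0%N)) A B
         + (-1) ^+ m * htensor (firstrest (ut m) (u m)) A B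
         + \sum_(1 <= k < m)
             (-1) ^+ k *
             (htensor (firstrest (ut k) (u k)) A B
              + htensor (firstrest (vt k) (ubar k)) A B))).
Proof.
case: m => [//|n] _ c0 om omN u ut vt ubar.
set w := expi (pi / (n.+1)%:R : R).
have hom k : om k = w ^+ k by rewrite /om omX.
have hub k : ubar k = vec2 1 (conjc (om k)).
  by apply: funext => l; rewrite /ubar /u /vec2; case: ifP => _ //; exact: conjc1.
have hvt k : vt k = vec2 c (conjc (om k)) by rewrite /vt /omN expiN.
have wk0 k : w ^+ k != 0 by apply: expf_neq0; apply: om_neq0.
have hc k : (k <= 2 * n.+1)%N -> conjc (w ^+ k) = w ^+ (2 * n.+1 - k).
  move=> hk; apply: (mulIf (wk0 k)); transitivity (1 : R[i]).
    by rewrite conjcX -exprMn expiJM expr1n.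
  by rewrite -exprD subnK // om_2m.
have n1 : (-1 : R[i]) != 0 by rewrite oppr_eq0 oner_eq0.
have sg k : (k <= 2 * n.+1)%N -> (-1 : R[i]) ^+ (2 * n.+1 - k) = (-1) ^+ k.
  move=> hk; apply: (mulIf (expf_neq0 k n1)); transitivity (1 : R[i]).
    by rewrite -exprD subnK // exprM expr2 mulrNN mulr1 expr1n.
  by rewrite -exprMn mulrNN mulr1 expr1n.
have nz : ((2 * n.+1)%:R : R[i]) != 0 by rewrite pnatr_eq0.
have key A B := keysum c A B.
split; last first.
  apply: funext => A; apply: funext => B /=.
  rewrite -(mulKf nz (EIJ c A B)) -key; congr (_ * _).
  rewrite (regroup (fun k => (-1) ^+ k * htensor (firstrest (vec2 c (w ^+ k)) (vec2 1 (w ^+ k))) A B)) /=.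
  congr (_ + _ + _).
  - by rewrite expr0 mul1r /ut /u hom.
  - by rewrite /ut /u hom.
  apply: eq_big_nat => k /andP[k1 km].
  rewrite mulrDr /ut /u hvt hub hom hc; last by lia.
  by rewrite sg //; lia.
split.
  exists (fun i : 'I_(2 * n.+1) => ((-1) ^+ i / ((2 * n.+1)%:R) : R)).
  exists (fun i : 'I_(2 * n.+1) => firstrest (vec2 c (w ^+ i)) (vec2 1 (w ^+ i))).
  apply: funext => A; apply: funext => B /=.
  rewrite (eq_bigr (fun i : 'I_(2 * n.+1) => ((2 * n.+1)%:R : R[i])^-1 *
     ((-1) ^+ i * htensor (firstrest (vec2 c (w ^+ i)) (vec2 1 (w ^+ i))) A B))); last first.
    by move=> i _; rewrite mulrA; congr (_ * _); rewrite rmorphM /= rmorphXn rmorphN1 fmorphV rmorph_nat mulrC.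
  by rewrite -mulr_sumr key mulKf.
move=> r' [lam [uu E']].
apply: leq_trans (lb c0 E') _.
by rewrite -[X in (_ <= X)%N](card_ord r') max_card.
Qed.
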